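(* Let $k$ be an algebraically closed field of characteristic zero, $n\ge1$, $q\in k$ a primitive $2n$-th root of unity, $a\in k$, and let $H_{4n}$ be the Hopf algebra generated by $z,x$ with relations $z^{2n}=1$, $zx=qxz$, $x^2=0$ and $\Delta(z)=z\otimes z+a(1-q^{-2})z^{n+1}x\otimes zx$, $\Delta(x)=x\otimes 1+z^n\otimes x$, $\epsilon(z)=1$, $\epsilon(x)=0$, $S(z)=z^{-1}$, $S(x)=-z^nx$. For integers $j$ let $E_j=\frac{1}{2n}\sum_{i=0}^{2n-1}q^{-ij}z^i$. Then $H_{4n}$ is a quasi-triangular Hopf algebra with universal $R$-matrix $$R=\sum_{i,j=0}^{2n-1}(-1)^{ij}E_i\otimes E_j+2a\sum_{i,j=0}^{2n-1}(-1)^{i(j+1)}E_ix\otimes E_jx.$$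
   Context: A pair $(H,R)$ with $H$ a finite-dimensional Hopf algebra and $R\in H\otimes H$ invertible is quasi-triangular (with universal $R$-matrix $R$) if $\Delta^{op}(h)=R\Delta(h)R^{-1}$ for all $h\in H$, $(\Delta\otimes \mathrm{id})(R)=R_{13}R_{23}$ and $(\mathrm{id}\otimes\Delta)(R)=R_{13}R_{12}$, where $\Delta^{op}=\tau\circ\Delta$ with $\tau$ the flip, $R_{12}=R\otimes 1$, $R_{23}=1\otimes R$, $R_{13}=(\tau\otimes\mathrm{id})(R_{23})$. *)

(* Defs.v *)
(* The Hopf algebra H_{4n} is modelled concretely by its
   PBW basis { z^i x^j : 0 <= i < 2n, j in {0,1} } with structure constants;
   H, H(x)H, H(x)H(x)H are the coefficient spaces over B, B*B, B*B*B. *)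
From HB Require Import structures.
From mathcomp Require Import all_boot all_order all_algebra.
Set Implicit Arguments. Unset Strict Implicit. Unset Printing Implicit Defensive.
Import Order.TTheory GRing.Theory Num.Theory.
Local Open Scope ring_scope.

Section H4n.
Variables (k : fieldType) (n : nat) (q a : k).

(* basis index (i, j) stands for z^i x^j *)
Local Notation B := ('I_(2 * n) * bool)%type.
Local Notation H := {ffun B -> k}.
Local Notation H2 := {ffun B * B -> k}.
Local Notation H3 := {ffun B * B * B -> k}.

Definition scl (T : finType) (c : k) (u : {ffun T -> k}) : {ffun T -> k} :=
  [ffun p => c * u p].
Local Notation "c *: u" := (scl c u) : ring_scope.

(* coefficient of z^m x^t in (z^i x^j)(z^l x^s), using x^2 = 0,
   z^{2n} = 1 and x z = q^{-1} z x *)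
Definition cst (b1 b2 b : B) : k :=
  if b1.2 && b2.2 then 0
  else if ((b.1 : nat) == (b1.1 + b2.1) %% (2 * n))%N && (b.2 == b1.2 || b2.2)
       then q^-1 ^+ (nat_of_bool b1.2 * b2.1)%N else 0.

Definition mulH (h g : H) : H :=
  [ffun b => \sum_(b1 : B) \sum_(b2 : B) h b1 * g b2 * cst b1 b2 b].
Definition mul2 (u v : H2) : H2 :=
  [ffun p => \sum_(p1 : B * B) \sum_(p2 : B * B)
     u p1 * v p2 * (cst p1.1 p2.1 p.1 * cst p1.2 p2.2 p.2)].
Definition mul3 (u v : H3) : H3 :=
  [ffun p => \sum_(p1 : B * B * B) \sum_(p2 : B * B * B)
     u p1 * v p2 * (cst p1.1.1 p2.1.1 p.1.1 * cst p1.1.2 p2.1.2 p.1.2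
                    * cst p1.2 p2.2 p.2)].

Definition zpow (i : nat) : H :=
  [ffun b : B => if ((b.1 : nat) == i %% (2 * n))%N && ~~ b.2 then 1 else 0].
Definition xH : H := [ffun b : B => if ((b.1 : nat) == 0)%N && b.2 then 1 else 0].
Definition oneH : H := zpow 0.
Definition ebas (b : B) : H := [ffun b' => (b' == b)%:R].

Definition tens (h g : H) : H2 := [ffun p => h p.1 * g p.2].
Definition tens3l (u : H2) (h : H) : H3 := [ffun p => u p.1 * h p.2].
Definition tens3r (h : H) (u : H2) : H3 := [ffun p => h p.1.1 * u (p.1.2, p.2)].
Definition one2 : H2 := tens oneH oneH.
Definition pow2 (u : H2) (m : nat) : H2 := iter m (mul2 u) one2.

Definition Dz : H2 :=
  tens (zpow 1) (zpow 1)
  + (a * (1 - q^-2)) *: tens (mulH (zpow (n + 1)) xH) (mulH (zpow 1) xH).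
Definition Dx : H2 := tens xH oneH + tens (zpow n) xH.
Definition Deltab (b : B) : H2 := mul2 (pow2 Dz b.1) (pow2 Dx b.2).
Definition Delta (h : H) : H2 := \sum_(b : B) h b *: Deltab b.
Definition flip2 (u : H2) : H2 := [ffun p => u (p.2, p.1)].
Definition Delta_op (h : H) : H2 := flip2 (Delta h).

Definition DeltaId (u : H2) : H3 :=
  \sum_(p : B * B) u p *: tens3l (Deltab p.1) (ebas p.2).
Definition IdDelta (u : H2) : H3 :=
  \sum_(p : B * B) u p *: tens3r (ebas p.1) (Deltab p.2).

Definition R12 (u : H2) : H3 := tens3l u oneH.
Definition R23 (u : H2) : H3 := tens3r oneH u.
Definition R13 (u : H2) : H3 := [ffun p => u (p.1.1, p.2) * oneH p.1.2].

Definition E (j : nat) : H :=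
  (2 * n)%:R^-1 *: \sum_(i < 2 * n) q^-1 ^+ (i * j) *: zpow i.
Definition Rmat : H2 :=
  \sum_(i < 2 * n) \sum_(j < 2 * n) (-1) ^+ (i * j) *: tens (E i) (E j)
  + (2 * a) *: \sum_(i < 2 * n) \sum_(j < 2 * n)
       (-1) ^+ (i * (j + 1)) *: tens (mulH (E i) xH) (mulH (E j) xH).

Definition quasi_triangular (R : H2) : Prop :=
  (exists Rinv : H2, mul2 R Rinv = one2 /\ mul2 Rinv R = one2 /\
     forall h : H, Delta_op h = mul2 (mul2 R (Delta h)) Rinv)
  /\ DeltaId R = mul3 (R13 R) (R23 R)
  /\ IdDelta R = mul3 (R13 R) (R12 R).

End H4n.

(* Main.v *)
Require Import Defs.
From HB Require Import structures.
From mathcomp Require Import all_boot all_order all_algebra.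
From mathcomp Require Import ring.
Set Implicit Arguments. Unset Strict Implicit. Unset Printing Implicit Defensive.
Import Order.TTheory GRing.Theory Num.Theory.
Local Open Scope ring_scope.

Section Gen.
Variable k : fieldType.

Lemma sclE (T : finType) c (u : {ffun T -> k}) p : scl c u p = c * u p.
Proof. by rewrite ffunE. Qed.

Lemma addfE (T : finType) (u v : {ffun T -> k}) p : (u + v) p = u p + v p.
Proof. by rewrite ffunE. Qed.

Lemma scl_addr (T : finType) c (u v : {ffun T -> k}) :
  scl c (u + v) = scl c u + scl c v.
Proof. by apply/ffunP=> p; rewrite !ffunE mulrDr. Qed.

Lemma scl0 (T : finType) c : scl c (0 : {ffun T -> k}) = 0.
Proof. by apply/ffunP=> p; rewrite !ffunE mulr0. Qed.

Lemma sclA (T : finType) c d (u : {ffun T -> k}) : scl c (scl d u) = scl (c * d) u.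
Proof. by apply/ffunP=> p; rewrite !ffunE mulrA. Qed.

Lemma scl_sum (T : finType) c I (r : seq I) (P : pred I) (F : I -> {ffun T -> k}) :
  scl c (\sum_(i <- r | P i) F i) = \sum_(i <- r | P i) scl c (F i).
Proof.
apply/ffunP=> p; rewrite ffunE !sum_ffunE mulr_sumr.
by apply: eq_bigr => i _; rewrite ffunE.
Qed.

Definition mulG (T : finType) (c : T -> T -> T -> k) (u v : {ffun T -> k}) :
  {ffun T -> k} := [ffun p => \sum_p1 \sum_p2 u p1 * v p2 * c p1 p2 p].

Section MulG.
Variables (T : finType) (c : T -> T -> T -> k).
Implicit Types u v w : {ffun T -> k}.

Lemma mulGDl u v w : mulG c (u + v) w = mulG c u w + mulG c v w.
Proof.
apply/ffunP=> p; rewrite !ffunE -big_split; apply: eq_bigr => p1 _.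
rewrite -big_split; apply: eq_bigr => p2 _; by rewrite !ffunE !mulrDl.
Qed.

Lemma mulGDr u v w : mulG c u (v + w) = mulG c u v + mulG c u w.
Proof.
apply/ffunP=> p; rewrite !ffunE -big_split; apply: eq_bigr => p1 _.
rewrite -big_split; apply: eq_bigr => p2 _; by rewrite !ffunE mulrDr mulrDl.
Qed.

Lemma mulGZl a u w : mulG c (scl a u) w = scl a (mulG c u w).
Proof.
apply/ffunP=> p; rewrite !ffunE mulr_sumr; apply: eq_bigr => p1 _.
rewrite mulr_sumr; apply: eq_bigr => p2 _; rewrite !ffunE; ring.
Qed.

Lemma mulGZr a u w : mulG c u (scl a w) = scl a (mulG c u w).
Proof.
apply/ffunP=> p; rewrite !ffunE mulr_sumr; apply: eq_bigr => p1 _.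
rewrite mulr_sumr; apply: eq_bigr => p2 _; rewrite !ffunE; ring.
Qed.

Lemma mulG0l w : mulG c 0 w = 0.
Proof.
apply/ffunP=> p; rewrite !ffunE big1 // => p1 _; rewrite big1 // => p2 _.
by rewrite ffunE !mul0r.
Qed.

Lemma mulG0r w : mulG c w 0 = 0.
Proof.
apply/ffunP=> p; rewrite !ffunE big1 // => p1 _; rewrite big1 // => p2 _.
by rewrite ffunE mulr0 mul0r.
Qed.

Lemma mulG_suml I (r : seq I) (P : pred I) (F : I -> {ffun T -> k}) w :
  mulG c (\sum_(i <- r | P i) F i) w = \sum_(i <- r | P i) mulG c (F i) w.
Proof.
elim/big_rec2: _ => [|i x y _ <-]; first exact: mulG0l.
by rewrite mulGDl.
Qed.

Lemma mulG_sumr I (r : seq I) (P : pred I) (F : I -> {ffun T -> k}) w :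
  mulG c w (\sum_(i <- r | P i) F i) = \sum_(i <- r | P i) mulG c w (F i).
Proof.
elim/big_rec2: _ => [|i x y _ <-]; first exact: mulG0r.
by rewrite mulGDr.
Qed.

Definition cocyc := forall p1 p2 p3 p,
  \sum_m c p1 p2 m * c m p3 p = \sum_m c p2 p3 m * c p1 m p.

Lemma mulGA : cocyc -> forall u v w, mulG c (mulG c u v) w = mulG c u (mulG c v w).
Proof.
move=> cc u v w; apply/ffunP=> p; rewrite !ffunE.
transitivity (\sum_p1 \sum_p2 \sum_p3 u p1 * v p2 * w p3 *
                \sum_m c p1 p2 m * c m p3 p).
  under eq_bigr => m _ do under eq_bigr => p3 _ do
    [rewrite ffunE mulr_suml mulr_suml;
     under eq_bigr => p1 _ do rewrite mulr_suml mulr_suml].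
  under eq_bigr => m _ do rewrite exchange_big.
  rewrite exchange_big.
  under eq_bigr => p1 _ do under eq_bigr => m _ do rewrite exchange_big.
  under eq_bigr => p1 _ do rewrite exchange_big.
  under eq_bigr => p1 _ do under eq_bigr => p2 _ do rewrite exchange_big.
  apply: eq_bigr => p1 _; apply: eq_bigr => p2 _; apply: eq_bigr => p3 _.
  rewrite mulr_sumr; apply: eq_bigr => m _; ring.
transitivity (\sum_p1 \sum_p2 \sum_p3 u p1 * v p2 * w p3 *
                \sum_m c p2 p3 m * c p1 m p).
  apply: eq_bigr => p1 _; apply: eq_bigr => p2 _; apply: eq_bigr => p3 _.
  by rewrite cc.
apply: eq_bigr => p1 _.
symmetry.
under eq_bigr => m _ do [rewrite ffunE mulr_sumr mulr_suml;
   under eq_bigr => p2 _ do rewrite mulr_sumr mulr_suml].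
rewrite exchange_big; apply: eq_bigr => p2 _.
rewrite exchange_big; apply: eq_bigr => p3 _.
rewrite mulr_sumr; apply: eq_bigr => m _.
ring.
Qed.
End MulG.

Definition prodc (T1 T2 : finType) (c1 : T1 -> T1 -> T1 -> k)
  (c2 : T2 -> T2 -> T2 -> k) : T1 * T2 -> T1 * T2 -> T1 * T2 -> k :=
  fun p1 p2 p => c1 p1.1 p2.1 p.1 * c2 p1.2 p2.2 p.2.

Definition tensG (T1 T2 : finType) (h : {ffun T1 -> k}) (g : {ffun T2 -> k}) :
  {ffun T1 * T2 -> k} := [ffun p => h p.1 * g p.2].

Lemma sum_pair (T1 T2 : finType) (F : T1 * T2 -> k) :
  \sum_p F p = \sum_a \sum_b F (a, b).
Proof. by rewrite pair_big; apply: eq_bigr => -[]. Qed.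

Lemma prodc_cocyc (T1 T2 : finType) c1 c2 :
  cocyc c1 -> cocyc c2 -> cocyc (@prodc T1 T2 c1 c2).
Proof.
move=> h1 h2 p1 p2 p3 p; rewrite /prodc.
rewrite [LHS]sum_pair [RHS]sum_pair /=.
transitivity ((\sum_m1 c1 p1.1 p2.1 m1 * c1 m1 p3.1 p.1) *
              (\sum_m2 c2 p1.2 p2.2 m2 * c2 m2 p3.2 p.2)).
  rewrite mulr_suml; apply: eq_bigr => m1 _; rewrite mulr_sumr.
  by apply: eq_bigr => m2 _; ring.
rewrite h1 h2 mulr_suml; apply: eq_bigr => m1 _; rewrite mulr_sumr.
by apply: eq_bigr => m2 _; ring.
Qed.


Lemma mulG_tens (T1 T2 : finType) c1 c2 (h h' : {ffun T1 -> k}) (g g' : {ffun T2 -> k}) :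
  mulG (prodc c1 c2) (tensG h g) (tensG h' g') = tensG (mulG c1 h h') (mulG c2 g g').
Proof.
apply/ffunP=> p; rewrite !ffunE /prodc.
rewrite sum_pair; under eq_bigr => a _ do under eq_bigr => b _ do rewrite sum_pair.
under eq_bigr => a _ do rewrite exchange_big.
rewrite mulr_suml; apply: eq_bigr => a _.
rewrite mulr_suml; apply: eq_bigr => a' _.
rewrite mulr_sumr; apply: eq_bigr => b _.
rewrite mulr_sumr; apply: eq_bigr => b' _.
rewrite !ffunE /=; ring.
Qed.

End Gen.

Section H4.
Variables (k : fieldType) (n : nat) (q a : k).
Hypothesis n_gt0 : (0 < n)%N.
Hypothesis qprim : (2 * n).-primitive_root q.

Local Notation N := (2 * n)%N.
Local Notation B := ('I_N * bool)%type.
Local Notation H := {ffun B -> k}.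
Local Notation H2 := {ffun B * B -> k}.
Local Notation H3 := {ffun B * B * B -> k}.
Local Notation Q := (q^-1).

Lemma N_gt0 : (0 < N)%N. Proof. by rewrite muln_gt0. Qed.
Definition ordm (e : nat) : 'I_N := Ordinal (ltn_pmod e N_gt0).
Definition mono (e : nat) (t : bool) : H := ebas k (ordm e, t).

Lemma qN : q ^+ N = 1. Proof. exact: prim_expr_order. Qed.
Lemma QN : Q ^+ N = 1. Proof. by rewrite exprVn qN invr1. Qed.
Lemma qn : q ^+ n = -1.
Proof.
have h1 : (q ^+ n) ^+ 2 = 1 by rewrite -exprM mulnC qN.
have h2 : q ^+ n != 1.
  rewrite -(expr0 q) (eq_prim_root_expr qprim) /= mod0n modn_small //.
  by rewrite -lt0n n_gt0.
  by rewrite mul2n -addnn -{1}(addn0 n) ltn_add2l.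
have : (q ^+ n - 1) * (q ^+ n + 1) = 0 by rewrite -subr_sqr_1 h1 subrr.
move/eqP; rewrite mulf_eq0 subr_eq0 (negbTE h2) /= addr_eq0 => /eqP //.
Qed.
Lemma Qn : Q ^+ n = -1. Proof. by rewrite exprVn qn invrN1. Qed.
Lemma Q_modE e : Q ^+ (e %% N) = Q ^+ e. Proof. exact: expr_mod QN. Qed.

Lemma mulHE : @mulH k n q = mulG (cst q). Proof. by []. Qed.
Lemma mul2E : @mul2 k n q = mulG (prodc (cst q) (cst q)). Proof. by []. Qed.
Lemma mul3E : @mul3 k n q = mulG (prodc (prodc (cst q) (cst q)) (cst q)). Proof. by []. Qed.

Definition bm (b1 b2 : B) : B := (ordm (b1.1 + b2.1), b1.2 || b2.2).
Definition gam (b1 b2 : B) : k :=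
  if b1.2 && b2.2 then 0 else Q ^+ (b1.2 * b2.1).

Lemma cstE b1 b2 b : cst q b1 b2 b = gam b1 b2 * (b == bm b1 b2)%:R.
Proof.
case: b => i t; rewrite /cst /gam /bm; case: (b1.2 && b2.2); first by rewrite mul0r.
rewrite xpair_eqE -val_eqE /=.
by case: ifP => _; rewrite ?mulr1 ?mulr0.
Qed.

Lemma sum_delta (T : finType) (b0 : T) (F : T -> k) :
  \sum_b (b == b0)%:R * F b = F b0.
Proof.
rewrite (bigD1 b0) //= eqxx mul1r big1 ?addr0 // => b /negbTE ->.
by rewrite mul0r.
Qed.

Lemma sum_delta' (T : finType) (b0 : T) (F : T -> k) :
  \sum_b F b * (b == b0)%:R = F b0.
Proof.
rewrite -[RHS](sum_delta b0); apply: eq_bigr => b _; exact: mulrC.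
Qed.

Lemma bmA b1 b2 b3 : bm (bm b1 b2) b3 = bm b1 (bm b2 b3).
Proof.
rewrite /bm /= orbA; congr (_, _); apply: val_inj => /=.
by rewrite modnDml modnDmr addnA.
Qed.

Lemma cst_cocyc : cocyc (@cst k n q).
Proof.
move=> b1 b2 b3 p.
under eq_bigr => m _ do rewrite cstE mulrAC.
rewrite sum_delta'; symmetry.
under eq_bigr => m _ do rewrite cstE mulrAC.
rewrite sum_delta' !cstE bmA !mulrA; symmetry; congr (_ * _).
rewrite /gam /bm /=.
case: b1 b2 b3 => [i1 [] ] [i2 [] ] [i3 [] ] /=; rewrite ?mul0r ?mulr0 ?mul1n ?mul0n ?expr0 ?mulr1 ?mul1r //.
by rewrite Q_modE exprD.
Qed.

Lemma mulGA2 : cocyc (prodc (@cst k n q) (@cst k n q)).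
Proof. exact: prodc_cocyc cst_cocyc cst_cocyc. Qed.

Lemma scl0l (T : finType) (u : {ffun T -> k}) : scl 0 u = 0.
Proof. by apply/ffunP=> p; rewrite !ffunE mul0r. Qed.
Lemma scl1 (T : finType) (u : {ffun T -> k}) : scl 1 u = u.
Proof. by apply/ffunP=> p; rewrite !ffunE mul1r. Qed.

Lemma mulH_ebas b1 b2 :
  mulH q (ebas k b1) (ebas k b2) = scl (gam b1 b2) (ebas k (bm b1 b2)).
Proof.
apply/ffunP=> b; rewrite !ffunE.
under eq_bigr => b1' _ do under eq_bigr => b2' _ do rewrite ffunE ffunE -mulrA.
under eq_bigr => b1' _ do rewrite -mulr_sumr sum_delta.
by rewrite sum_delta cstE.
Qed.

Lemma mulH_mono e s f t :
  mulH q (mono e s) (mono f t) =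
  if s && t then 0 else scl (Q ^+ (s * f)) (mono (e + f) (s || t)).
Proof.
rewrite /mono mulH_ebas /gam /bm /=.
have -> : ordm (ordm e + ordm f) = ordm (e + f).
  by apply: val_inj; rewrite /= modnDm.
case: s; case: t; rewrite /= ?scl0l ?mul1n ?Q_modE //.
Qed.

Lemma tensDl (h h' g : H) : tens (h + h') g = tens h g + tens h' g.
Proof. by apply/ffunP=> p; rewrite !ffunE mulrDl. Qed.
Lemma tensDr (h g g' : H) : tens h (g + g') = tens h g + tens h g'.
Proof. by apply/ffunP=> p; rewrite !ffunE mulrDr. Qed.
Lemma tensZl c (h g : H) : tens (scl c h) g = scl c (tens h g).
Proof. by apply/ffunP=> p; rewrite !ffunE mulrA. Qed.
Lemma tensZr c (h g : H) : tens h (scl c g) = scl c (tens h g).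
Proof. by apply/ffunP=> p; rewrite !ffunE mulrCA. Qed.
Lemma tens0l (g : H) : tens 0 g = 0.
Proof. by apply/ffunP=> p; rewrite !ffunE mul0r. Qed.
Lemma tens0r (g : H) : tens g 0 = 0.
Proof. by apply/ffunP=> p; rewrite !ffunE mulr0. Qed.

Lemma mul2_tens (h g h' g' : H) :
  mul2 q (tens h g) (tens h' g') = tens (mulH q h h') (mulH q g g').
Proof. exact: (mulG_tens (@cst k n q) (@cst k n q) h h' g g'). Qed.

Lemma mul2Dl (u v w : H2) : mul2 q (u + v) w = mul2 q u w + mul2 q v w.
Proof. exact: mulGDl. Qed.
Lemma mul2Dr (u v w : H2) : mul2 q u (v + w) = mul2 q u v + mul2 q u w.
Proof. exact: mulGDr. Qed.
Lemma mul2Zl c (u w : H2) : mul2 q (scl c u) w = scl c (mul2 q u w).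
Proof. exact: mulGZl. Qed.
Lemma mul2Zr c (u w : H2) : mul2 q u (scl c w) = scl c (mul2 q u w).
Proof. exact: mulGZr. Qed.
Lemma mul2_0l (u : H2) : mul2 q 0 u = 0. Proof. exact: mulG0l. Qed.
Lemma mul2_0r (u : H2) : mul2 q u 0 = 0. Proof. exact: mulG0r. Qed.
Lemma mul2A (u v w : H2) : mul2 q (mul2 q u v) w = mul2 q u (mul2 q v w).
Proof. exact: (mulGA mulGA2). Qed.

Lemma flip_tens (h g : H) : flip2 (tens h g) = tens g h.
Proof. by apply/ffunP=> p; rewrite !ffunE mulrC. Qed.
Lemma flipD (u v : H2) : flip2 (u + v) = flip2 u + flip2 v.
Proof. by apply/ffunP=> p; rewrite !ffunE. Qed.
Lemma flipZ c (u : H2) : flip2 (scl c u) = scl c (flip2 u).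
Proof. by apply/ffunP=> p; rewrite !ffunE. Qed.

Lemma zpowE e : zpow k n e = mono e false.
Proof.
apply/ffunP=> -[i t]; rewrite !ffunE /= xpair_eqE -val_eqE /=.
by case: t => /=; rewrite ?andbF ?andbT /=; case: (i == _ :> nat).
Qed.
Lemma xHE : xH k n = mono 0 true.
Proof.
apply/ffunP=> -[i t]; rewrite !ffunE /= xpair_eqE -val_eqE /= mod0n.
by case: t => /=; rewrite ?andbF ?andbT /=; case: (i == _ :> nat).
Qed.
Lemma oneHE : oneH k n = mono 0 false.
Proof. exact: zpowE. Qed.

Lemma mono_eq e e' t : (e %% N = e' %% N)%N -> mono e t = mono e' t.
Proof. by move=> h; rewrite /mono; congr (ebas _ (_, _)); apply: val_inj. Qed.

Lemma exprQ2 : q^-2 = Q ^+ 2. Proof. by rewrite exprVn. Qed.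

Lemma DzE : Dz n q a = tens (mono 1 false) (mono 1 false)
  + scl (a * (1 - Q ^+ 2)) (tens (mono (n + 1) true) (mono 1 true)).
Proof.
by rewrite /Dz !zpowE xHE !mulH_mono /= !addn0 !mul0n expr0 !scl1 exprQ2.
Qed.

Lemma one2E : one2 k n = tens (mono 0 false) (mono 0 false).
Proof. by rewrite /one2 oneHE. Qed.

Lemma pow2Dz l : pow2 q (Dz n q a) l =
  tens (mono l false) (mono l false)
  + scl (a * (1 - Q ^+ (2 * l))) (tens (mono (l + n) true) (mono l true)).
Proof.
elim: l => [|l IH].
  by rewrite /pow2 /= one2E muln0 expr0 subrr mulr0 scl0l addr0.
rewrite /pow2 /= -/(pow2 q (Dz n q a) l) IH DzE.
rewrite !(mul2Dl, mul2Dr, mul2Zl, mul2Zr, mul2_tens, mulH_mono) /=.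
rewrite ?(tens0l, tens0r, tensZl, tensZr, scl0, scl0l, addr0, add0r, mul1n, mul0n, expr0, scl1, sclA).
have -> : (1 + (l + n) = l.+1 + n)%N by rewrite addnA add1n.
have -> : (n + 1 + l = l.+1 + n)%N by rewrite addn1 addSn addnC.
rewrite add1n mulr1 scl1 -addrA.
congr (_ + _); apply/ffunP => p; rewrite !ffunE.
rewrite mulnS exprD mul2n -addnn exprD; ring.
Qed.

Lemma scl_addl (T : finType) c d (u : {ffun T -> k}) : scl c u + scl d u = scl (c + d) u.
Proof. by apply/ffunP=> p; rewrite !ffunE mulrDl. Qed.

Hypothesis char0 : [pchar k] =i pred0.
Lemma two_neq0 : (2 : k) != 0.
Proof. by move/pcharf0P: char0 => ->. Qed.

Lemma q_neq0 : q != 0.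
Proof. by apply/eqP => q0; move: qN; rewrite q0 expr0n muln_eq0 /= (negbTE (lt0n_neq0 n_gt0)) => /eqP; rewrite eq_sym oner_eq0. Qed.

Lemma monoNN t : mono (n + n) t = mono 0 t.
Proof. by apply: mono_eq; rewrite addnn -mul2n modnn mod0n. Qed.

Definition g1 := mono n false.
Definition m1 := mono 0 false.
Definition x1 := mono 0 true.
Definition gx1 := mono n true.

Definition Ac : H2 :=
  scl (2^-1) (tens m1 m1) + scl (2^-1) (tens g1 m1) + scl (2^-1) (tens m1 g1)
  + scl (- 2^-1) (tens g1 g1).
Definition Rc : H2 := Ac + scl a (tens x1 x1) + scl (- a) (tens x1 gx1)
  + scl a (tens gx1 x1) + scl a (tens gx1 gx1).
Definition Rinvc : H2 := Ac + scl a (tens x1 x1) + scl a (tens x1 gx1)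
  + scl (- a) (tens gx1 x1) + scl a (tens gx1 gx1).

Arguments mono : simpl never.
Arguments ordm : simpl never.
Arguments tens : simpl never.
Arguments scl : simpl never.

Definition monoP (x : nat * bool) : H := mono x.1 x.2.
Definition mulP (x y : nat * bool) : k * (nat * bool) :=
  ((if x.2 && y.2 then 0 else Q ^+ (x.2 * y.1)), (x.1 + y.1, x.2 || y.2)%N).

Lemma mulH_monoP x y :
  mulH q (monoP x) (monoP y) = scl (mulP x y).1 (monoP (mulP x y).2).
Proof.
case: x y => [e s] [f t]; rewrite /monoP /mulP /= mulH_mono.
by case: s; case: t; rewrite /= ?scl0l.
Qed.

Local Notation I2 := (k * (nat * bool) * (nat * bool))%type.
Definition it2 (i : I2) : H2 := scl i.1.1 (tens (monoP i.1.2) (monoP i.2)).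
Definition prod2 (i j : I2) : I2 :=
  (i.1.1 * j.1.1 * (mulP i.1.2 j.1.2).1 * (mulP i.2 j.2).1,
   (mulP i.1.2 j.1.2).2, (mulP i.2 j.2).2).
Definition sum2 (L : seq I2) : H2 := \sum_(i <- L) it2 i.

Lemma mul2_it2 i j : mul2 q (it2 i) (it2 j) = it2 (prod2 i j).
Proof.
rewrite /it2 mul2Zl mul2Zr mul2_tens !mulH_monoP tensZl tensZr !sclA.
by rewrite /prod2 /=; congr (scl _ _); ring.
Qed.

Lemma mul2_sum2 L1 L2 :
  mul2 q (sum2 L1) (sum2 L2) = sum2 [seq prod2 i j | i <- L1, j <- L2].
Proof.
rewrite /sum2 big_allpairs_dep mul2E mulG_suml; apply: eq_bigr => i _.
by rewrite mulG_sumr; apply: eq_bigr => j _; rewrite -mul2E mul2_it2.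
Qed.

Lemma sum2_cons i L : sum2 (i :: L) = it2 i + sum2 L.
Proof. by rewrite /sum2 big_cons. Qed.
Lemma sum2_nil : sum2 [::] = 0.
Proof. by rewrite /sum2 big_nil. Qed.

Definition Acl : seq I2 :=
  [:: (2^-1, (0%N, false), (0%N, false)); (2^-1, (n%N, false), (0%N, false));
      (2^-1, (0%N, false), (n%N, false)); (- 2^-1, (n%N, false), (n%N, false))].
Definition Rcl : seq I2 := Acl ++
  [:: (a, (0%N, true), (0%N, true)); (- a, (0%N, true), (n%N, true));
      (a, (n%N, true), (0%N, true)); (a, (n%N, true), (n%N, true))].
Definition Rinvl : seq I2 := Acl ++
  [:: (a, (0%N, true), (0%N, true)); (a, (0%N, true), (n%N, true));
      (- a, (n%N, true), (0%N, true)); (a, (n%N, true), (n%N, true))].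
Definition onel : seq I2 := [:: (1, (0%N, false), (0%N, false))].

Lemma one2_sum : one2 k n = sum2 onel.
Proof. by rewrite one2E sum2_cons sum2_nil addr0 /it2 scl1. Qed.

Lemma ordmNN : ordm (n + n) = ordm 0.
Proof. by apply: val_inj; rewrite /= addnn -mul2n modnn mod0n. Qed.

Definition atm (b : B) (x : nat * bool) : k := (b == (ordm x.1, x.2))%:R.
Arguments atm : simpl never.

Lemma it2E i p : it2 i p = i.1.1 * (atm p.1 i.1.2 * atm p.2 i.2).
Proof. by rewrite !ffunE. Qed.

Lemma atmNN b t : atm b ((n + n)%N, t) = atm b (0%N, t).
Proof. by rewrite /atm ordmNN. Qed.

Lemma sum2E L p : sum2 L p = \sum_(i <- L) i.1.1 * (atm p.1 i.1.2 * atm p.2 i.2).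
Proof. by rewrite /sum2 sum_ffunE; apply: eq_bigr => i _; rewrite it2E. Qed.

Ltac expand2 := apply/ffunP => p; rewrite !sum2E ?big_allpairs_dep ?big_cons ?big_nil /=;
  rewrite ?(addn0, add0n, atmNN, mul1n, mul0n, expr0, Qn).

Lemma RRinv : mul2 q (sum2 Rcl) (sum2 Rinvl) = one2 k n.
Proof.
rewrite one2_sum mul2_sum2.
expand2; field; exact: two_neq0.
Qed.

Lemma RinvR : mul2 q (sum2 Rinvl) (sum2 Rcl) = one2 k n.
Proof.
rewrite one2_sum mul2_sum2.
expand2; field; exact: two_neq0.
Qed.

Definition DzL : seq I2 :=
  [:: (1, (1%N, false), (1%N, false)); (a * (1 - Q ^+ 2), ((n + 1)%N, true), (1%N, true))].
Definition DxL : seq I2 :=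
  [:: (1, (0%N, true), (0%N, false)); (1, (n%N, false), (0%N, true))].

Lemma DzL_E : Dz n q a = sum2 DzL.
Proof. by rewrite DzE !sum2_cons sum2_nil addr0 /it2 scl1. Qed.
Lemma DxL_E : Dx k n = sum2 DxL.
Proof.
by rewrite /Dx !sum2_cons sum2_nil addr0 /it2 !scl1 xHE oneHE zpowE.
Qed.

Definition flipI (i : I2) : I2 := (i.1.1, i.2, i.1.2).
Lemma flip_sum2 L : flip2 (sum2 L) = sum2 (map flipI L).
Proof.
apply/ffunP => p; rewrite ffunE !sum2E big_map; apply: eq_bigr => i _.
by rewrite /= [atm p.2 _ * _]mulrC.
Qed.

Lemma atm1 b t : atm b ((1 + n)%N, t) = atm b ((n + 1)%N, t).
Proof. by rewrite addnC. Qed.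
Lemma atm2 b t : atm b ((n + 1 + n)%N, t) = atm b (1%N, t).
Proof. by rewrite /atm; congr ((_ == (_, _))%:R); apply: val_inj; rewrite /= addnAC addnn -mul2n -modnDml modnn. Qed.
Lemma atm3 b t : atm b ((n + (n + 1))%N, t) = atm b (1%N, t).
Proof. by rewrite addnA addnAC atm2. Qed.

Ltac fld := field; do ?[apply/andP; split]; first [exact: q_neq0 | exact: two_neq0].

Ltac expand2' := apply/ffunP => p; rewrite !sum2E ?big_allpairs_dep ?big_cons ?big_nil /=;
  rewrite ?(addn0, add0n, atmNN, atm1, atm2, atm3, mul1n, mul0n, expr0, expr1, Qn).

Lemma flipDz : mul2 q (flip2 (sum2 DzL)) (sum2 Rcl) = mul2 q (sum2 Rcl) (sum2 DzL).
Proof.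
rewrite flip_sum2 !mul2_sum2.
expand2'.
fld.
Qed.

Lemma flipDx : mul2 q (flip2 (sum2 DxL)) (sum2 Rcl) = mul2 q (sum2 Rcl) (sum2 DxL).
Proof.
rewrite flip_sum2 !mul2_sum2.
expand2'.
fld.
Qed.

Lemma ordmE e : val (ordm e) = (e %% N)%N. Proof. by []. Qed.
Lemma ordmE' e : nat_of_ord (ordm e) = (e %% N)%N. Proof. by []. Qed.

Lemma cst_1l b2 b : cst q (ordm 0, false) b2 b = (b == b2)%:R.
Proof.
rewrite cstE /gam /bm /= mul1r; congr ((b == (_, _))%:R).
by apply: val_inj; rewrite ordmE mod0n add0n modn_small.
Qed.
Lemma cst_1r b2 b : cst q b2 (ordm 0, false) b = (b == b2)%:R.
Proof.
rewrite cstE /gam /bm /= andbF mod0n muln0 expr0 mul1r orbF.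
congr ((b == (_, _))%:R).
by apply: val_inj; rewrite ordmE addn0 modn_small.
Qed.

Lemma one2_coord p : one2 k n p = (p.1 == (ordm 0, false))%:R * (p.2 == (ordm 0, false))%:R.
Proof. by rewrite one2E !ffunE. Qed.

Lemma sum_deltaC (T : finType) c (b0 : T) (F : T -> k) :
  \sum_b c * ((b == b0)%:R * F b) = c * F b0.
Proof. by rewrite -mulr_sumr sum_delta. Qed.

Lemma mul2_1l (u : H2) : mul2 q (one2 k n) u = u.
Proof.
apply/ffunP => p; rewrite ffunE exchange_big /=.
under eq_bigr => p2 _ do rewrite sum_pair.
under eq_bigr => p2 _ do under eq_bigr => x _ do under eq_bigr => y _ do
  rewrite one2_coord /= -mulrA -mulrA.
under eq_bigr => p2 _ do under eq_bigr => x _ do rewrite sum_deltaC.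
under eq_bigr => p2 _ do rewrite sum_delta !cst_1l mulrA.
rewrite sum_pair /=.
transitivity (\sum_x (x == p.1)%:R * u (x, p.2)).
  apply: eq_bigr => x _.
  rewrite -(sum_delta p.2 (fun y => (x == p.1)%:R * u (x, y))).
  by apply: eq_bigr => y _; rewrite (eq_sym p.1) (eq_sym p.2); ring.
by rewrite sum_delta; case: p.
Qed.

Lemma sum_delta_pair (T1 T2 : finType) (b1 : T1) (b2 : T2) (G : T1 -> T2 -> k) :
  \sum_x \sum_y (x == b1)%:R * (y == b2)%:R * G x y = G b1 b2.
Proof.
rewrite -(sum_delta b1 (fun x => G x b2)); apply: eq_bigr => x _.
rewrite -(sum_delta b2 (fun y => (x == b1)%:R * G x y)); apply: eq_bigr => y _.
ring.
Qed.

Lemma mul2_1r (u : H2) : mul2 q u (one2 k n) = u.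
Proof.
apply/ffunP => p; rewrite ffunE.
transitivity (\sum_p1 (p1.1 == p.1)%:R * (p1.2 == p.2)%:R * u p1).
  apply: eq_bigr => p1 _; rewrite sum_pair.
  under eq_bigr => x _ do under eq_bigr => y _ do rewrite one2_coord /=.
  transitivity (\sum_x \sum_y (x == (ordm 0, false))%:R * (y == (ordm 0, false))%:R *
      (u p1 * (cst q p1.1 x p.1 * cst q p1.2 y p.2))).
    by apply: eq_bigr => x _; apply: eq_bigr => y _; ring.
  by rewrite sum_delta_pair !cst_1r (eq_sym p.1) (eq_sym p.2); ring.
rewrite sum_pair /=.
transitivity (\sum_x \sum_y (x == p.1)%:R * (y == p.2)%:R * u (x, y)).
  by [].
by rewrite sum_delta_pair; case: p.
Qed.

Lemma flip2_mul (u v : H2) : flip2 (mul2 q u v) = mul2 q (flip2 u) (flip2 v).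
Proof.
have inj : injective (fun z : B * B => (z.2, z.1)) by move=> [? ?] [? ?] [-> ->].
apply/ffunP => p; rewrite !ffunE (reindex_inj inj); apply: eq_bigr => p1 _.
rewrite (reindex_inj inj); apply: eq_bigr => p2 _.
rewrite !ffunE /=; case: p1 p2 => [? ?] [? ?] /=; ring.
Qed.

Lemma flip_one2 : flip2 (one2 k n) = one2 k n.
Proof. by rewrite one2E flip_tens. Qed.

Lemma flip_pow (u : H2) m : flip2 (pow2 q u m) = pow2 q (flip2 u) m.
Proof.
elim: m => [|m IH]; first exact: flip_one2.
by rewrite /pow2 /= flip2_mul -/(pow2 q u m) IH.
Qed.

Lemma flip_sum I (r : seq I) (P : pred I) (F : I -> H2) :
  flip2 (\sum_(i <- r | P i) F i) = \sum_(i <- r | P i) flip2 (F i).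
Proof.
apply/ffunP => p; rewrite ffunE !sum_ffunE; apply: eq_bigr => i _.
by rewrite ffunE.
Qed.

Local Notation Rs := (sum2 Rcl).
Local Notation Ris := (sum2 Rinvl).
Definition cj (X : H2) : H2 := mul2 q (mul2 q Rs X) Ris.

Lemma cj_mul X Y : cj (mul2 q X Y) = mul2 q (cj X) (cj Y).
Proof.
rewrite /cj [in RHS]mul2A -[mul2 q Ris (mul2 q (mul2 q Rs Y) Ris)]mul2A.
rewrite -[mul2 q Ris (mul2 q Rs Y)]mul2A RinvR mul2_1l.
by rewrite -!mul2A.
Qed.

Lemma cj_one : cj (one2 k n) = one2 k n.
Proof. by rewrite /cj mul2_1r RRinv. Qed.

Lemma cj_pow X m : cj (pow2 q X m) = pow2 q (cj X) m.
Proof.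
elim: m => [|m IH]; first exact: cj_one.
by rewrite /pow2 /= cj_mul -/(pow2 q X m) IH.
Qed.

Lemma cj_flip X : mul2 q (flip2 X) Rs = mul2 q Rs X -> cj X = flip2 X.
Proof. by move=> h; rewrite /cj -h mul2A RRinv mul2_1r. Qed.

Lemma flip_Deltab b : flip2 (Deltab q a b) = cj (Deltab q a b).
Proof.
rewrite /Deltab flip2_mul !flip_pow cj_mul !cj_pow.
rewrite (cj_flip (X := Dz n q a)); last by rewrite DzL_E flipDz.
by rewrite (cj_flip (X := Dx k n)) // DxL_E flipDx.
Qed.

Lemma Delta_op_conj h : Delta_op q a h = mul2 q (mul2 q Rs (Delta q a h)) Ris.
Proof.
rewrite /Delta_op /Delta flip_sum.
set F := fun b => scl (h b) (Deltab q a b).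
have e1 : mul2 q Rs (\sum_b F b) = \sum_b mul2 q Rs (F b) by exact: mulG_sumr.
have e2 : mul2 q (\sum_b mul2 q Rs (F b)) Ris = \sum_b mul2 q (mul2 q Rs (F b)) Ris.
  by exact: mulG_suml.
rewrite e1 e2; apply: eq_bigr => b _.
by rewrite /F flipZ mul2Zr mul2Zl flip_Deltab.
Qed.

Definition tens3 (h g f : H) : H3 := [ffun p => h p.1.1 * g p.1.2 * f p.2].

Lemma mul3_tens3 (h g f h' g' f' : H) :
  mul3 q (tens3 h g f) (tens3 h' g' f') = tens3 (mulH q h h') (mulH q g g') (mulH q f f').
Proof.
have e := mulG_tens (prodc (@cst k n q) (@cst k n q)) (@cst k n q)
  (tensG h g) (tensG h' g') f f'.
rewrite (mulG_tens (@cst k n q) (@cst k n q) h h' g g') in e.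
have t3 : forall h g f : H, tens3 h g f = tensG (tensG h g) f.
  by move=> ? ? ?; apply/ffunP => p; rewrite !ffunE.
by rewrite !t3 mul3E e.
Qed.

Local Notation I3 := (k * (nat * bool) * (nat * bool) * (nat * bool))%type.
Definition it3 (i : I3) : H3 :=
  scl i.1.1.1 (tens3 (monoP i.1.1.2) (monoP i.1.2) (monoP i.2)).
Definition prod3 (i j : I3) : I3 :=
  (i.1.1.1 * j.1.1.1 * (mulP i.1.1.2 j.1.1.2).1 * (mulP i.1.2 j.1.2).1 * (mulP i.2 j.2).1,
   (mulP i.1.1.2 j.1.1.2).2, (mulP i.1.2 j.1.2).2, (mulP i.2 j.2).2).
Definition sum3 (L : seq I3) : H3 := \sum_(i <- L) it3 i.

Lemma mul3_it3 i j : mul3 q (it3 i) (it3 j) = it3 (prod3 i j).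
Proof.
rewrite /it3 mul3E mulGZl mulGZr -mul3E mul3_tens3 !mulH_monoP.
apply/ffunP => p; rewrite !ffunE /prod3 /=; ring.
Qed.

Lemma mul3_sum3 L1 L2 :
  mul3 q (sum3 L1) (sum3 L2) = sum3 [seq prod3 i j | i <- L1, j <- L2].
Proof.
rewrite /sum3 big_allpairs_dep mul3E mulG_suml; apply: eq_bigr => i _.
by rewrite mulG_sumr; apply: eq_bigr => j _; rewrite -mul3E mul3_it3.
Qed.

Lemma sum3E L p : sum3 L p =
  \sum_(i <- L) i.1.1.1 * (atm p.1.1 i.1.1.2 * atm p.1.2 i.1.2 * atm p.2 i.2).
Proof. by rewrite /sum3 sum_ffunE; apply: eq_bigr => i _; rewrite !ffunE. Qed.

Lemma oneH_atm b : oneH k n b = atm b (0%N, false).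
Proof. by rewrite oneHE ffunE. Qed.

Definition r13 (i : I2) : I3 := (i.1.1, i.1.2, (0%N, false), i.2).
Definition r23 (i : I2) : I3 := (i.1.1, (0%N, false), i.1.2, i.2).
Definition r12 (i : I2) : I3 := (i.1.1, i.1.2, i.2, (0%N, false)).

Lemma R13_sum2 L : R13 (sum2 L) = sum3 (map r13 L).
Proof.
apply/ffunP => p; rewrite ffunE sum2E sum3E big_map mulr_suml.
by apply: eq_bigr => i _; rewrite oneH_atm /=; ring.
Qed.
Lemma R23_sum2 L : R23 (sum2 L) = sum3 (map r23 L).
Proof.
apply/ffunP => p; rewrite ffunE sum2E sum3E big_map mulr_sumr.
by apply: eq_bigr => i _; rewrite oneH_atm /=; ring.
Qed.
Lemma R12_sum2 L : R12 (sum2 L) = sum3 (map r12 L).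
Proof.
apply/ffunP => p; rewrite ffunE sum2E sum3E big_map mulr_suml.
by apply: eq_bigr => i _; rewrite oneH_atm /=; ring.
Qed.

Lemma DeltaId_sum2 L p : DeltaId q a (sum2 L) p =
  \sum_(i <- L) i.1.1 * (Deltab q a (ordm i.1.2.1, i.1.2.2) p.1 * atm p.2 i.2).
Proof.
rewrite /DeltaId sum_ffunE.
transitivity (\sum_b1 \sum_b2 (b2 == p.2)%:R * (sum2 L (b1, b2) * Deltab q a b1 p.1)).
  rewrite sum_pair; apply: eq_bigr => b1 _; apply: eq_bigr => b2 _.
  by rewrite !ffunE eq_sym /=; ring.
under eq_bigr => b1 _ do rewrite sum_delta.
under eq_bigr => b1 _ do rewrite sum2E mulr_suml.
rewrite exchange_big; apply: eq_bigr => i _ /=.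
transitivity (\sum_b1 (b1 == (ordm i.1.2.1, i.1.2.2))%:R *
                 (i.1.1 * (Deltab q a b1 p.1 * atm p.2 i.2))).
  by apply: eq_bigr => b1 _; rewrite {1}/atm; ring.
by rewrite sum_delta.
Qed.

Lemma IdDelta_sum2 L p : IdDelta q a (sum2 L) p =
  \sum_(i <- L) i.1.1 * (atm p.1.1 i.1.2 * Deltab q a (ordm i.2.1, i.2.2) (p.1.2, p.2)).
Proof.
rewrite /IdDelta sum_ffunE.
transitivity (\sum_b2 \sum_b1 (b1 == p.1.1)%:R * (sum2 L (b1, b2) * Deltab q a b2 (p.1.2, p.2))).
  rewrite sum_pair exchange_big; apply: eq_bigr => b2 _; apply: eq_bigr => b1 _.
  by rewrite !ffunE eq_sym /=; ring.
under eq_bigr => b2 _ do rewrite sum_delta.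
under eq_bigr => b2 _ do rewrite sum2E mulr_suml.
rewrite exchange_big; apply: eq_bigr => i _ /=.
transitivity (\sum_b2 (b2 == (ordm i.2.1, i.2.2))%:R *
                 (i.1.1 * (atm p.1.1 i.1.2 * Deltab q a b2 (p.1.2, p.2)))).
  by apply: eq_bigr => b2 _; rewrite {2}/atm; ring.
by rewrite sum_delta.
Qed.

Lemma n_modN : (n %% N)%N = n.
Proof. by rewrite modn_small // mul2n -addnn -{1}(addn0 n) ltn_add2l. Qed.

Definition DnL : seq I2 := [:: (1, (n%N, false), (n%N, false))].

Lemma Deltab0f : Deltab q a (ordm 0, false) = sum2 onel.
Proof. by rewrite /Deltab /= mod0n /pow2 /= mul2_1l one2_sum. Qed.
Lemma Deltab0t : Deltab q a (ordm 0, true) = sum2 DxL.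
Proof. by rewrite /Deltab /= mod0n /pow2 /= mul2_1l mul2_1r DxL_E. Qed.
Lemma DzN : pow2 q (Dz n q a) n = sum2 DnL.
Proof.
rewrite pow2Dz QN subrr mulr0 scl0l addr0.
by rewrite /DnL sum2_cons sum2_nil addr0 /it2 scl1.
Qed.
Lemma Deltabnf : Deltab q a (ordm n, false) = sum2 DnL.
Proof. by rewrite /Deltab /= n_modN /= mul2_1r -DzN. Qed.
Lemma Deltabnt : Deltab q a (ordm n, true) = sum2 [seq prod2 i j | i <- DnL, j <- DxL].
Proof. by rewrite /Deltab /= n_modN /= mul2_1r DzN DxL_E mul2_sum2. Qed.

Lemma DeltaIdR : DeltaId q a Rs = mul3 q (R13 Rs) (R23 Rs).
Proof.
apply/ffunP => p; rewrite DeltaId_sum2 R13_sum2 R23_sum2 mul3_sum3 sum3E.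
rewrite big_allpairs_dep !big_map /Rcl /Acl big_cat !big_cons !big_nil /=.
rewrite Deltab0f Deltab0t Deltabnf Deltabnt !sum2E ?big_allpairs_dep !big_cons !big_nil /=.
rewrite ?(addn0, add0n, atmNN, mul1n, mul0n, expr0, Qn).
fld.
Qed.

Lemma IdDeltaR : IdDelta q a Rs = mul3 q (R13 Rs) (R12 Rs).
Proof.
apply/ffunP => p; rewrite IdDelta_sum2 R13_sum2 R12_sum2 mul3_sum3 sum3E.
rewrite big_allpairs_dep !big_map /Rcl /Acl big_cat !big_cons !big_nil /=.
rewrite Deltab0f Deltab0t Deltabnf Deltabnt !sum2E ?big_allpairs_dep !big_cons !big_nil /=.
rewrite ?(addn0, add0n, atmNN, mul1n, mul0n, expr0, Qn).
fld.
Qed.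

Lemma N_neq0 : (N%:R : k) != 0.
Proof. by move/pcharf0P: char0 => ->; rewrite -lt0n N_gt0. Qed.

Lemma orth l j : (j < N)%N ->
  \sum_(i < N) (q ^+ l * Q ^+ j) ^+ i = if (l %% N == j)%N then N%:R else 0.
Proof.
move=> jN; set w := q ^+ l * Q ^+ j.
case: ifP => [/eqP lj | lj].
  have -> : w = 1.
    by rewrite /w -(prim_expr_mod qprim) lj exprVn mulfV // expf_neq0 // q_neq0.
  by rewrite (eq_bigr (fun _ => 1)) ?sumr_const ?card_ord // => i _; rewrite expr1n.
have wN : w ^+ N = 1.
  by rewrite /w exprMn -!exprM mulnC exprM qN expr1n mulnC exprM QN expr1n mulr1.
have w1 : w != 1.
  apply/negP => /eqP w1; move/negP: lj; apply; apply/eqP.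
  have : q ^+ l = q ^+ j.
    by rewrite -[q ^+ l]mulr1 -(mulVf (expf_neq0 j q_neq0)) mulrA -exprVn -/w w1 mul1r.
  move/eqP; rewrite (eq_prim_root_expr qprim) => /eqP ->; exact: modn_small.
have := subrX1 w N; rewrite wN subrr => /esym/eqP; rewrite mulf_eq0 subr_eq0 (negbTE w1) /=.
by move/eqP.
Qed.

Lemma Ecoord l b : \sum_(i < N) (q ^+ l) ^+ i * E n q i b = zpow k n l b.
Proof.
case: b => j t.
under eq_bigr => i _ do rewrite ffunE sum_ffunE.
transitivity (\sum_(i < N) N%:R^-1 * ((~~ t)%:R * (q ^+ l * Q ^+ j) ^+ i)).
  apply: eq_bigr => i _.
  rewrite (bigD1 j) //= big1 ?addr0; last first.
    move=> i' /negbTE ne; rewrite !ffunE /= modn_small //.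
    by rewrite -val_eqE /= eq_sym in ne; rewrite ne /= mulr0.
  rewrite !ffunE /= modn_small // eqxx /=.
  rewrite exprMn -!exprM mulnC; case: t => /=; ring.
rewrite -mulr_sumr -mulr_sumr orth // !ffunE /=.
case: t => /=; rewrite ?andbF ?andbT ?mul0r ?mulr0 //.
rewrite mul1r eq_sym; case: (_ == _); rewrite ?mulr0 // mulVf //; exact: N_neq0.
Qed.

Lemma sign_split (i j : nat) : (-1) ^+ (i * j) =
  2^-1 * (1 + (-1) ^+ i + (-1) ^+ j - (-1) ^+ i * (-1) ^+ j) :> k.
Proof.
rewrite -[(-1) ^+ (i * j)]signr_odd oddM -[(-1) ^+ i]signr_odd -[(-1) ^+ j]signr_odd.
have h2 := two_neq0.
by case: (odd i); case: (odd j); rewrite /= ?expr0 ?expr1; field.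
Qed.

Lemma dsum_sign (e f : 'I_N -> k) :
  \sum_(i < N) \sum_(j < N) (-1) ^+ (i * j) * (e i * f j) =
  2^-1 * ((\sum_(i < N) e i) * (\sum_(j < N) f j) + (\sum_(i < N) (-1) ^+ i * e i) * (\sum_(j < N) f j)
     + (\sum_(i < N) e i) * (\sum_(j < N) (-1) ^+ j * f j)
     - (\sum_(i < N) (-1) ^+ i * e i) * (\sum_(j < N) (-1) ^+ j * f j)).
Proof.
rewrite !big_distrlr -!big_split -sumrB mulr_sumr; apply: eq_bigr => i _.
rewrite -!big_split -sumrB mulr_sumr; apply: eq_bigr => j _ /=.
rewrite sign_split; ring.
Qed.

Lemma Esum_ffun l : \sum_(i < N) scl ((q ^+ l) ^+ i) (E n q i) = zpow k n l.
Proof.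
apply/ffunP => b; rewrite -Ecoord sum_ffunE; apply: eq_bigr => i _.
by rewrite ffunE.
Qed.

Lemma Esum0 b : \sum_(i < N) E n q i b = zpow k n 0 b.
Proof.
rewrite -Ecoord; apply: eq_bigr => i _; by rewrite expr0 expr1n mul1r.
Qed.
Lemma Esumn b : \sum_(i < N) (-1) ^+ i * E n q i b = zpow k n n b.
Proof. by rewrite -Ecoord qn. Qed.

Lemma Exsum l b : \sum_(i < N) (q ^+ l) ^+ i * mulH q (E n q i) (xH k n) b =
  mulH q (zpow k n l) (xH k n) b.
Proof.
rewrite -Esum_ffun mulHE mulG_suml sum_ffunE; apply: eq_bigr => i _.
by rewrite mulGZl sclE.
Qed.
Lemma Exsum0 b : \sum_(i < N) mulH q (E n q i) (xH k n) b = mulH q (zpow k n 0) (xH k n) b.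
Proof.
rewrite -Exsum; apply: eq_bigr => i _; by rewrite expr0 expr1n mul1r.
Qed.
Lemma Exsumn b : \sum_(i < N) (-1) ^+ i * mulH q (E n q i) (xH k n) b =
  mulH q (zpow k n n) (xH k n) b.
Proof. by rewrite -Exsum qn. Qed.

Lemma monoE e t b : mono e t b = atm b (e, t).
Proof. by rewrite ffunE. Qed.

Lemma tensE (h g : H) p : tens h g p = h p.1 * g p.2.
Proof. by rewrite ffunE. Qed.
Lemma sgn2 (i j : nat) (x y : k) :
  (-1) ^+ (i * (j + 1)) * (x * y) = (-1) ^+ (i * j) * (((-1) ^+ i * x) * y).
Proof. by rewrite mulnDr muln1 exprD; ring. Qed.
Lemma sgnK (i : nat) (x : k) : (-1) ^+ i * ((-1) ^+ i * x) = x.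
Proof. by rewrite mulrA -exprMn mulN1r opprK expr1n mul1r. Qed.

Lemma Rmat_sum : Rmat n q a = sum2 Rcl.
Proof.
apply/ffunP => p; rewrite /Rmat addfE sclE !sum_ffunE.
under eq_bigr => i _ do rewrite sum_ffunE.
under [X in _ + _ * X]eq_bigr => i _ do rewrite sum_ffunE.
under eq_bigr => i _ do under eq_bigr => j _ do rewrite sclE tensE.
under [X in _ + _ * X]eq_bigr => i _ do under eq_bigr => j _ do
  rewrite sclE tensE sgn2.
rewrite !dsum_sign.
under [X in _ + _ * (_ * (_ + X * _ + _ - _))]eq_bigr => i _ do rewrite sgnK.
under [X in _ + _ * (_ * (_ + _ + _ - X * _))]eq_bigr => i _ do rewrite sgnK.
rewrite !Esum0 !Esumn !Exsum0 !Exsumn !zpowE xHE !mulH_mono /= !sclE !monoE.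
rewrite /Rcl /Acl big_cat !big_cons !big_nil !it2E /=.
rewrite ?(addn0, add0n, mul0n, expr0).
fld.
Qed.

Theorem main_gen : quasi_triangular q a (Rmat n q a).
Proof.
rewrite Rmat_sum; split; last split.
- exists (sum2 Rinvl); split; first exact: RRinv.
  split; first exact: RinvR.
  exact: Delta_op_conj.
- exact: DeltaIdR.
- exact: IdDeltaR.
Qed.

End H4.

Theorem mainTheorem3 (k : closedFieldType) (n : nat) (q a : k) :
  [pchar k] =i pred0 -> (0 < n)%N -> (2 * n).-primitive_root q ->
  @quasi_triangular k n q a (@Rmat k n q a).
Proof. by move=> c0 n0 pq; apply: main_gen. Qed.
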